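(* Let $Q=\partial_\psi S$ and $R=\partial_\psi P_0$ be $\partial_\psi$-delta operators with $S,P_0\in\Sigma_\psi$ invertible, and let $(p_n)$ and $(r_n)$ be their respective $\partial_\psi$-basic polynomial sequences. Then for every $n>0$, $$p_n(x)=\hat x_\psi\,(P_0S^{-1})^n\,\hat x_\psi^{-1}\,r_n(x).$$
   Context: Let $F$ be a field of characteristic $0$, $P=F[x]$. Fix $(\psi_n)_{n\ge0}$ in $F$ with $\psi_0=1$, $\psi_n\ne0$, $\psi_{-1}=0$; $n_\psi=\psi_{n-1}/\psi_n$, $n_\psi!=1/\psi_n$, $0_\psi!=1$. $\partial_\psi x^n=n_\psi x^{n-1}$ (linear); $E^a(\partial_\psi)=\sum_k\frac{a^k}{k_\psi!}\partial_\psi^k$. $\Sigma_\psi$: algebra of linear operators on $P$ commuting with all $E^a(\partial_\psi)$. A $\partial_\psi$-delta operator is $Q\in\Sigma_\psi$ with $Q(x)$ a nonzero constant; its $\partial_\psi$-basic sequence: $\deg p_n=n$, $p_0=1$, $p_n(0)=0$ for $n>0$, $Qp_n=n_\psi p_{n-1}$. $\hat x_\psi x^n=\frac{n+1}{(n+1)_\psi}x^{n+1}$ (linear), and $\hat x_\psi^{-1}$ is its inverse on polynomials with zero constant term: $\hat x_\psi^{-1}x^n=\frac{n_\psi}{n}x^{n-1}$ for $n\ge1$. *)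

(* Defs.v *)
From HB Require Import structures.
From mathcomp Require Import all_boot all_order all_algebra.
Set Implicit Arguments. Unset Strict Implicit. Unset Printing Implicit Defensive.
Import Order.TTheory GRing.Theory Num.Theory.
Local Open Scope ring_scope.

Section PsiCalculus.
Variable F : fieldType.
Variable psi : nat -> F.

(* n_psi = psi_{n-1} / psi_n, with psi_{-1} = 0, so 0_psi = 0 *)
Definition nq (n : nat) : F := match n with 0 => 0 | m.+1 => psi m / psi m.+1 end.

Definition qfact (n : nat) : F := (psi n)^-1.

(* partial_psi x^n = n_psi x^{n-1}, extended linearly *)
Definition dpsi (p : {poly F}) : {poly F} :=
  \poly_(i < size p) (p`_i.+1 * nq i.+1).

(* E^a(partial_psi) = sum_k a^k / k_psi! partial_psi^k ; on a polynomial p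
   all terms with k >= size p vanish, so the sum is finite *)
Definition Epsi (a : F) (p : {poly F}) : {poly F} :=
  \sum_(k < size p) (a ^+ k / qfact k) *: iter k dpsi p.

Definition islinear (T : {poly F} -> {poly F}) : Prop :=
  forall (a : F) (p q : {poly F}), T (a *: p + q) = a *: T p + T q.

Definition in_Sigma (T : {poly F} -> {poly F}) : Prop :=
  islinear T /\ forall (a : F) (p : {poly F}), T (Epsi a p) = Epsi a (T p).

Definition delta_op (Q : {poly F} -> {poly F}) : Prop :=
  in_Sigma Q /\ exists c : F, c != 0 /\ Q 'X = c%:P.

Definition basic_seq (Q : {poly F} -> {poly F}) (p : nat -> {poly F}) : Prop :=
  [/\ forall n, size (p n) = n.+1,
      p 0%N = 1,
      forall n, (0 < n)%N -> (p n).[0] = 0,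
      Q (p 0%N) = 0 (* = 0_psi p_{-1} *) &
      forall n, Q (p n.+1) = nq n.+1 *: p n].

(* hat x_psi x^n = (n+1)/(n+1)_psi x^{n+1} *)
Definition xhat (p : {poly F}) : {poly F} :=
  \poly_(i < (size p).+1)
    (match i with 0 => 0 | j.+1 => p`_j * (j.+1%:R / nq j.+1) end).

(* hat x_psi^{-1} x^n = n_psi / n x^{n-1} for n >= 1
   (the inverse of xhat on polynomials with zero constant term;
    the constant term is discarded) *)
Definition xhatinv (p : {poly F}) : {poly F} :=
  \poly_(i < size p) (p`_i.+1 * (nq i.+1 / i.+1%:R)).

End PsiCalculus.

(* Main.v *)
Require Import Defs.
From HB Require Import structures.
From mathcomp Require Import all_boot all_order all_algebra.
From mathcomp Require Import ring.
Import Order.TTheory GRing.Theory Num.Theory.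
Local Open Scope ring_scope.

Section Work.
Variable F : fieldType.
Hypothesis charF : [pchar F] =i pred0.
Variable psi : nat -> F.
Hypothesis psi0 : psi 0%N = 1.
Hypothesis psi_nz : forall n, psi n != 0.

Local Notation D := (dpsi psi).
Local Notation X := (xhat psi).
Local Notation Xi := (xhatinv psi).

Lemma natF_neq0 n : (0 < n)%N -> (n%:R : F) != 0.
Proof. by move=> n0; rewrite (proj1 (pcharf0P _) charF) -lt0n. Qed.

Lemma natF_inj : injective (fun n : nat => (n%:R : F)).
Proof.
move=> m n /= E; wlog le : m n E / (m <= n)%N.
  by move=> W; case/orP: (leq_total m n) => h; [|symmetry]; apply: W.
move: E; rewrite -(subnKC le) natrD -{1}[m%:R]addr0 => /addrI /esym /eqP.
rewrite (proj1 (pcharf0P _) charF) subn_eq0 => h.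
by move/eqP: h => ->; rewrite addn0.
Qed.

Lemma nq_nz n : nq psi n.+1 != 0.
Proof. by rewrite /= mulf_neq0 ?invr_eq0. Qed.

Lemma coef_D p i : (D p)`_i = p`_i.+1 * nq psi i.+1.
Proof.
rewrite /dpsi coef_poly; case: ltnP => // h.
by rewrite nth_default ?mul0r // (leq_trans h).
Qed.

Lemma coef_X0 p : (X p)`_0 = 0.
Proof. by rewrite /xhat coef_poly. Qed.

Lemma coef_XS p i : (X p)`_i.+1 = p`_i * (i.+1%:R / nq psi i.+1).
Proof.
rewrite /xhat coef_poly ltnS; case: ltnP => // h.
by rewrite nth_default ?mul0r.
Qed.

Lemma coef_Xi p i : (Xi p)`_i = p`_i.+1 * (nq psi i.+1 / i.+1%:R).
Proof.
rewrite /xhatinv coef_poly; case: ltnP => // h.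
by rewrite nth_default ?mul0r // (leq_trans h).
Qed.

Lemma D_lin a p q : D (a *: p + q) = a *: D p + D q.
Proof. by apply/polyP=> i; rewrite coefD coefZ !coef_D coefD coefZ mulrDl mulrA. Qed.

Lemma X_lin a p q : X (a *: p + q) = a *: X p + X q.
Proof.
apply/polyP=> [[|i]]; first by rewrite coefD coefZ !coef_X0 mulr0 addr0.
by rewrite coefD coefZ !coef_XS coefD coefZ mulrDl mulrA.
Qed.

Lemma XiX p : Xi (X p) = p.
Proof.
apply/polyP=> i; rewrite coef_Xi coef_XS -mulrA -[RHS]mulr1; congr (_ * _).
rewrite mulrA divfK ?nq_nz // mulfV //.
exact: natF_neq0.
Qed.

Lemma DX p : D (X p) = p + X (D p).
Proof.
apply/polyP=> i; rewrite coefD coef_D coef_XS.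
case: i => [|i]; first by rewrite coef_X0 addr0 -mulrA divfK ?nq_nz // mulr1.
rewrite coef_XS coef_D.
move: (nq_nz i) (nq_nz i.+1); set a := nq psi i.+1; set b := nq psi i.+2.
move=> a0 b0; rewrite -[i.+2]addn1 natrD -mulrA divfK // mulrDr mulr1 addrC.
by congr (_ + _); rewrite -mulrA [a * _]mulrC divfK.
Qed.

Lemma D_eq0 p : D p = 0 -> p = (p`_0)%:P.
Proof.
move=> h; apply/polyP=> [[|i]]; rewrite coefC //=.
have := congr1 (fun q : {poly F} => q`_i) h; rewrite /= coef_D coef0 => /eqP.
by rewrite mulf_eq0 (negbTE (nq_nz _)) orbF => /eqP.
Qed.

Lemma DXn n : D 'X^(n.+1) = nq psi n.+1 *: 'X^n.
Proof.
apply/polyP=> i; rewrite coef_D coefZ !coefXn eqSS.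
by case: eqP => [->|]; rewrite ?mulr1 ?mul1r ?mulr0 ?mul0r.
Qed.

Lemma DC c : D c%:P = 0.
Proof. by apply/polyP=> i; rewrite coef_D coefC coef0 mul0r. Qed.

Lemma XiXn n : Xi 'X^(n.+1) = (nq psi n.+1 / n.+1%:R) *: 'X^n.
Proof.
apply/polyP=> i; rewrite coef_Xi coefZ !coefXn eqSS.
by case: eqP => [->|]; rewrite ?mulr1 ?mul1r ?mulr0 ?mul0r.
Qed.


Definition commD (A : {poly F} -> {poly F}) :=
  islinear A /\ forall p, A (D p) = D (A p).

Section Lin.
Variable A : {poly F} -> {poly F}.
Hypothesis Al : islinear A.
Lemma lin0 : A 0 = 0.
Proof.
have := Al 1 0 0; rewrite !scale1r addr0 -{1}[A 0]addr0 => h.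
by have := addrI _ h.
Qed.
Lemma linD p q : A (p + q) = A p + A q.
Proof. by have := Al 1 p q; rewrite !scale1r. Qed.
Lemma linZ a p : A (a *: p) = a *: A p.
Proof. by have := Al a p 0; rewrite !addr0 lin0 addr0. Qed.
Lemma linN p : A (- p) = - A p.
Proof. by rewrite -scaleN1r linZ scaleN1r. Qed.
Lemma linB p q : A (p - q) = A p - A q.
Proof. by rewrite linD linN. Qed.
Lemma lin_sum (I : Type) (r : seq I) (P : pred I) (f : I -> {poly F}) :
  A (\sum_(i <- r | P i) f i) = \sum_(i <- r | P i) A (f i).
Proof. exact: (big_morph A linD lin0). Qed.
End Lin.

Lemma D_islin : islinear D.
Proof. exact: D_lin. Qed.

Lemma X_islin : islinear X.
Proof. exact: X_lin. Qed.

Lemma iter_lin (A : {poly F} -> {poly F}) n : islinear A -> islinear (iter n A).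
Proof.
move=> Al; elim: n => [|n IH] a p q //=.
by rewrite IH Al.
Qed.

Lemma comp_commD (A B : {poly F} -> {poly F}) : commD A -> commD B -> commD (fun q => A (B q)).
Proof.
move=> [Al Ad] [Bl Bd]; split; first by move=> a p q; rewrite Bl Al.
by move=> p; rewrite Bd Ad.
Qed.
Arguments comp_commD {A B} _ _.


Lemma iter_commD (A : {poly F} -> {poly F}) n : commD A -> commD (iter n A).
Proof.
move=> [Al Ad]; split; first exact: iter_lin.
by elim: n => [|n IH] p //=; rewrite IH Ad.
Qed.
Arguments iter_commD {A} n _.


Lemma iterD_commD n : commD (iter n D).
Proof. apply: iter_commD; split; [exact: D_islin | by []]. Qed.

Lemma size_D (p : {poly F}) : (size (D p) <= (size p).-1)%N.
Proof.
apply/leq_sizeP => j hj; rewrite coef_D nth_default ?mul0r //.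
by case: (size p) hj => // n.
Qed.

Lemma iterD_big (p : {poly F}) k : (size p <= k)%N -> iter k D p = 0.
Proof.
elim: k p => [|k IH] p h /=.
  by move: h; rewrite leqn0 size_poly_eq0 => /eqP.
rewrite -iterS iterSr; apply: IH.
by rewrite (leq_trans (size_D p)) // -ltnS; case: (size p) h.
Qed.

Lemma sum_widen n N (f : nat -> {poly F}) : (n <= N)%N ->
  (forall k, (n <= k)%N -> f k = 0) -> \sum_(k < n) f k = \sum_(k < N) f k.
Proof.
move=> le h; rewrite -(subnKC le) big_split_ord /= [X in _ = _ + X]big1 ?addr0 //.
by move=> i _; rewrite h // leq_addr.
Qed.

Lemma Epsi_sum a (q : {poly F}) N : (size q <= N)%N ->
  Epsi psi a q = \sum_(k < N) (a ^+ k * psi k) *: iter k D q.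
Proof.
move=> h; rewrite /Epsi (@sum_widen _ N (fun k => (a ^+ k / qfact psi k) *: iter k D q) h).
  by apply: eq_bigr => k _; rewrite /qfact invrK.
by move=> k hk; rewrite iterD_big ?scaler0.
Qed.

Lemma Sigma_commD (A : {poly F} -> {poly F}) : in_Sigma psi A -> commD A.
Proof.
move=> [Al AE]; split => // p.
set N := (maxn (size p) (size (A p))).+2.
have hp : (size p <= N)%N.
  by apply: (leq_trans (leq_maxl _ (size (A p)))); rewrite /N -addn2 leq_addr.
have hAp : (size (A p) <= N)%N.
  by apply: (leq_trans (leq_maxr (size p) _)); rewrite /N -addn2 leq_addr.
pose Dl k := A (iter k D p) - iter k D (A p).
have H a : \sum_(k < N) (a ^+ k * psi k) *: Dl k = 0.
  have := AE a p; rewrite (Epsi_sum _ _ _ hp) (Epsi_sum _ _ _ hAp) (lin_sum _ Al).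
  move/eqP; rewrite -subr_eq0 -sumrB => /eqP E; rewrite -[RHS]E.
  by apply: eq_bigr => k _; rewrite /Dl scalerBr (linZ _ Al).
apply/eqP; rewrite -subr_eq0; apply/eqP/polyP => i; rewrite coef0.
pose P := \poly_(k < N) (psi k * (Dl k)`_i).
have P0 : P = 0.
  apply/eqP; apply: contraT => Pn0.
  have := max_poly_roots Pn0 (rs := [seq m%:R | m <- iota 0 N]).
  rewrite size_map size_iota map_inj_uniq ?iota_uniq; last exact: natF_inj.
  have -> : all (root P) [seq m%:R | m <- iota 0 N].
    apply/allP => x _; rewrite /root horner_poly.
    have := congr1 (fun q : {poly F} => q`_i) (H x); rewrite /= coef_sum coef0 => E.
    apply/eqP; rewrite -[RHS]E; apply: eq_bigr => k _.
    by rewrite coefZ mulrC mulrA.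
  move=> /(_ isT isT); rewrite ltnNge (leq_trans (size_poly _ _)) //.
have := congr1 (fun q : {poly F} => q`_1) P0; rewrite /= coef_poly coef0 /=.
by move/eqP; rewrite mulf_eq0 (negbTE (psi_nz 1)) /= => /eqP.
Qed.


Definition ee n : {poly F} := psi n *: 'X^n.

Lemma De0 : D (ee 0) = 0.
Proof. by rewrite /ee psi0 scale1r expr0 -polyC1 DC. Qed.

Lemma DeS n : D (ee n.+1) = ee n.
Proof.
rewrite /ee (linZ _ D_islin) DXn scalerA; congr (_ *: _).
by rewrite /= mulrC divfK.
Qed.

Lemma iter_commute (B : {poly F} -> {poly F}) j q :
  (forall p, B (D p) = D (B p)) -> B (iter j D q) = iter j D (B q).
Proof. by move=> Bd; elim: j => //= j IH; rewrite Bd IH. Qed.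

Lemma iterDe j n : iter j D (ee n) = if (j <= n)%N then ee (n - j) else 0.
Proof.
elim: j n => [|j IH] n; first by rewrite subn0.
rewrite iterSr; case: n => [|m].
  by rewrite De0 (lin0 _ (iter_lin _ j D_islin)).
by rewrite DeS IH.
Qed.

Lemma coef0_ee k : (ee k)`_0 = (k == 0)%:R.
Proof. by rewrite /ee coefZ coefXn; case: k => [|k] /=; rewrite ?psi0 ?mulr1 ?mulr0. Qed.

Lemma sum_delta N n (f : nat -> F) : (n < N)%N ->
  \sum_(j < N) f j * ((j : nat) == n)%:R = f n.
Proof.
elim: N => [|N IH] //; rewrite ltnS leq_eqVlt => /orP [/eqP ->|h].
  rewrite big_ord_recr /= eqxx mulr1 big1 ?add0r // => i _.
  by rewrite (ltn_eqF (ltn_ord i)) mulr0.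
rewrite big_ord_recr /= IH // (_ : (N == n) = false) ?mulr0 ?addr0 //.
by apply/negbTE; rewrite neq_ltn h orbT.
Qed.

Lemma q_decomp (q : {poly F}) :
  q = \sum_(i < size q) (q`_i / psi i) *: ee i.
Proof.
rewrite -{1}[q]coefK poly_def; apply: eq_bigr => i _.
by rewrite /ee scalerA divfK.
Qed.

Section Expand.
Variable A : {poly F} -> {poly F}.
Hypothesis cA : commD A.
Let c k := (A (ee k))`_0.

Lemma expand_ee n N : (n < N)%N ->
  A (ee n) = \sum_(j < N) c j *: iter j D (ee n).
Proof.
case: cA => Al Ad.
have key : forall m, (m < N)%N ->
    D (A (ee m)) = \sum_(j < N) c j *: iter j D (D (ee m)) ->
    A (ee m) = \sum_(j < N) c j *: iter j D (ee m).
  move=> m hm E; set S := \sum_(j < N) _.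
  have Dv : D (A (ee m) - S) = 0.
    rewrite (linB _ D_islin) E (lin_sum _ D_islin) -sumrB big1 // => j _.
    by rewrite (linZ _ D_islin) -iterS iterSr subrr.
  have h0 : (A (ee m) - S)`_0 = 0.
  rewrite coefB /S coef_sum.
  under eq_bigr => j _ do rewrite coefZ iterDe.
  have -> : \sum_(j < N) c j * (if (j <= m)%N then ee (m - j) else 0)`_0
          = \sum_(j < N) c j * ((j : nat) == m)%:R.
    apply: eq_bigr => j _; congr (_ * _).
    case: leqP => h; last by rewrite coef0 (gtn_eqF h).
    by rewrite coef0_ee subn_eq0 eqn_leq h ?andbT ?andTb.
  by rewrite sum_delta // subrr.
  have := D_eq0 _ Dv; rewrite h0 => /eqP; rewrite subr_eq0 => /eqP.
  by [].
elim: n => [|n IH] hN; apply: key => //.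
  rewrite -Ad De0 (lin0 _ Al) big1 // => j _.
  by rewrite (lin0 _ (iter_lin _ j D_islin)) scaler0.
by rewrite -Ad DeS IH // ltnW.
Qed.

Lemma expand (q : {poly F}) N : (size q <= N)%N ->
  A q = \sum_(j < N) c j *: iter j D q.
Proof.
move=> hq; have Al := cA.1.
rewrite {1}[q]q_decomp (lin_sum _ Al).
under eq_bigr => i _ do rewrite (linZ _ Al) (@expand_ee i N (leq_trans (ltn_ord i) hq)) scaler_sumr.
rewrite exchange_big /=; apply: eq_bigr => j _.
transitivity (c j *: iter j D (\sum_(i < size q) (q`_i / psi i) *: ee i)); last by rewrite -q_decomp.
rewrite (lin_sum _ (iter_lin _ j D_islin)) scaler_sumr.
apply: eq_bigr => i _.
by rewrite (linZ _ (iter_lin _ j D_islin)) !scalerA mulrC.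
Qed.
End Expand.


Lemma commD_comm (A B : {poly F} -> {poly F}) :
  commD A -> commD B -> forall q, A (B q) = B (A q).
Proof.
move=> cA cB q; case: (cB) => Bl Bd.
set N := maxn (size q) (size (B q)).
rewrite (@expand A cA (B q) N) ?leq_maxr //.
rewrite [in RHS](@expand A cA q N) ?leq_maxl //.
rewrite (lin_sum _ Bl); apply: eq_bigr => j _.
by rewrite (linZ _ Bl) (iter_commute _ _ _ Bd).
Qed.
Arguments commD_comm {A B} _ _ q.


Lemma cD : commD D.
Proof. by split; [exact: D_islin|]. Qed.

Lemma inv_commD (A Ainv : {poly F} -> {poly F}) : commD A ->
  (forall q, A (Ainv q) = q) -> (forall q, Ainv (A q) = q) -> commD Ainv.
Proof.
move=> [Al Ad] h1 h2; split.
  by move=> a p q; rewrite -{1}(h1 p) -{1}(h1 q) -Al h2.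
by move=> p; rewrite -{1}(h1 p) -Ad h2.
Qed.
Arguments inv_commD {A Ainv} _ _ _.


Definition pinch (A : {poly F} -> {poly F}) (z : {poly F}) := A (X z) - X (A z).

Lemma XD r : X (D r) = D (X r) - r.
Proof. by rewrite DX addrC addKr. Qed.

Lemma pinch_commD (A : {poly F} -> {poly F}) : commD A -> commD (pinch A).
Proof.
move=> [Al Ad]; split.
  move=> a p q; rewrite /pinch X_lin Al Al X_lin scalerBr opprD addrACA.
  by [].
move=> p; rewrite /pinch XD Ad XD (linB _ Al) Ad (linB _ D_islin).
by rewrite opprB addrA subrK.
Qed.
Arguments pinch_commD {A} _.


Lemma XXi (p : {poly F}) : p`_0 = 0 -> X (Xi p) = p.
Proof.
move=> p0; apply/polyP => [[|i]]; first by rewrite coef_X0 p0.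
rewrite coef_XS coef_Xi -mulrA -[RHS]mulr1; congr (_ * _).
rewrite mulrA divfK ?mulfV ?nq_nz //; exact: natF_neq0.
Qed.

Lemma iter_inv (A Ainv B : {poly F} -> {poly F}) :
  commD B -> commD Ainv -> (forall q, A (Ainv q) = q) ->
  forall n y, iter n (fun q => A (B q)) (iter n Ainv y) = iter n B y.
Proof.
move=> cB cAi h1; elim=> [|n IH] y //.
rewrite [iter n.+1 Ainv y]iterSr iterS IH -iterS.
by rewrite (commD_comm (iter_commD n.+1 cB) cAi) h1.
Qed.

Section Transfer.
Variables S Sinv : {poly F} -> {poly F}.
Hypothesis cS : commD S.
Hypothesis h1 : forall q, S (Sinv q) = q.
Hypothesis h2 : forall q, Sinv (S q) = q.

Let cSi : commD Sinv := inv_commD cS h1 h2.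
Let Sp := pinch S.
Let cSp : commD Sp := pinch_commD cS.

Lemma M1 z : X (Sinv z) = Sinv (X z) + Sp (Sinv (Sinv z)).
Proof.
have E : S (X (Sinv z)) = X z + Sp (Sinv z).
  by rewrite /Sp /pinch h1 addrC subrK.
by rewrite -[LHS]h2 E (linD _ cSi.1) (commD_comm cSi cSp).
Qed.

Lemma Mn n y : X (iter n Sinv y) = iter n Sinv (X y) + n%:R *: Sp (iter n.+1 Sinv y).
Proof.
elim: n y => [|n IH] y; first by rewrite /= scale0r addr0.
rewrite iterS M1 IH (linD _ cSi.1) (linZ _ cSi.1) (commD_comm cSi cSp).
rewrite -addrA; congr (_ + _).
by rewrite -natr1 scalerDl scale1r.
Qed.

Definition ww n := iter n Sinv ('X^n) + Sp (iter n.+1 Sinv (D 'X^n)).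

Lemma ww_eq n : (0 < n)%N -> ww n = X (iter n Sinv (Xi 'X^n)).
Proof.
case: n => [|m] // _.
rewrite Mn XXi ?coefXn // /ww; congr (_ + _).
rewrite -(linZ _ (comp_commD cSp (iter_commD m.+2 cSi)).1).
by rewrite XiXn DXn scalerA mulrC divfK // natF_neq0.
Qed.

Lemma ww0 : ww 0 = 1.
Proof.
rewrite /ww /= expr0 -polyC1 DC (lin0 _ cSi.1) (lin0 _ cSp.1) addr0.
by [].
Qed.

Lemma ww_Q n : D (S (ww n.+1)) = nq psi n.+1 *: ww n.
Proof.
rewrite /ww (linD _ cS.1) (commD_comm cS cSp) !iterS !h1 -!iterS.
rewrite (linD _ D_islin) (commD_comm cD (iter_commD _ cSi)).
rewrite (commD_comm cD cSp) (commD_comm cD (iter_commD _ cSi)).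
rewrite DXn (linZ _ (iter_commD _ cSi).1) (linZ _ D_islin).
rewrite (linZ _ (comp_commD cSp (iter_commD _ cSi)).1).
by rewrite -scalerDr.
Qed.

Lemma ww_c0 n : (0 < n)%N -> (ww n)`_0 = 0.
Proof. by move=> h; rewrite ww_eq // coef_X0. Qed.

Lemma basic_ww p : basic_seq psi (fun q => D (S q)) p -> forall n, p n = ww n.
Proof.
case=> _ p0 pc _ pQ; elim=> [|n IH]; first by rewrite p0 ww0.
set d := p n.+1 - ww n.+1.
have Dd : D (S d) = 0.
  by rewrite /d (linB _ cS.1) (linB _ D_islin) pQ ww_Q IH subrr.
have Sd := D_eq0 _ Dd.
have D0 : D d = 0.
  by rewrite -[d]h2 Sd (commD_comm cD cSi) DC (lin0 _ cSi.1).
have := D_eq0 _ D0; rewrite /d coefB -horner_coef0 pc // ww_c0 // subrr.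
by move/eqP; rewrite subr_eq0 => /eqP.
Qed.

Lemma transfer p : basic_seq psi (fun q => D (S q)) p ->
  forall n, (0 < n)%N -> p n = X (iter n Sinv (Xi 'X^n)).
Proof. by move=> bp n hn; rewrite (basic_ww _ bp) ww_eq. Qed.

End Transfer.

End Work.

Theorem mainTheorem12 (F : fieldType) (charF : [pchar F] =i pred0)
  (psi : nat -> F) (psi0 : psi 0%N = 1) (psi_nz : forall n, psi n != 0)
  (S Sinv P0 P0inv : {poly F} -> {poly F})
  (S_Sig : in_Sigma psi S) (P0_Sig : in_Sigma psi P0)
  (S_inv1 : forall q, S (Sinv q) = q) (S_inv2 : forall q, Sinv (S q) = q)
  (P0_inv1 : forall q, P0 (P0inv q) = q) (P0_inv2 : forall q, P0inv (P0 q) = q)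
  (Q_delta : delta_op psi (fun q => dpsi psi (S q)))
  (R_delta : delta_op psi (fun q => dpsi psi (P0 q)))
  (p r : nat -> {poly F})
  (p_basic : basic_seq psi (fun q => dpsi psi (S q)) p)
  (r_basic : basic_seq psi (fun q => dpsi psi (P0 q)) r) :
  forall n : nat, (0 < n)%N ->
    p n = xhat psi (iter n (fun q => P0 (Sinv q)) (xhatinv psi (r n))).
Proof.
move=> n hn.
have cS := Sigma_commD _ charF _ psi_nz _ S_Sig.
have cP := Sigma_commD _ charF _ psi_nz _ P0_Sig.
rewrite (transfer _ charF _ psi0 psi_nz _ _ cS S_inv1 S_inv2 _ p_basic _ hn).
rewrite (transfer _ charF _ psi0 psi_nz _ _ cP P0_inv1 P0_inv2 _ r_basic _ hn).
rewrite (XiX _ charF _ psi_nz); congr (xhat psi _); symmetry.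
apply: (iter_inv _ _ psi0 psi_nz P0 P0inv Sinv (@inv_commD _ _ S Sinv cS S_inv1 S_inv2)
          (@inv_commD _ _ P0 P0inv cP P0_inv1 P0_inv2) P0_inv1).
Qed.
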